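(* Let $(\mathcal V,\mathcal W,\lambda)$ be a FTvN system. Then it comes from a normal decomposition system if and only if it is orbit-transitive, $\mathcal W\subseteq\mathcal V$, and $\lambda^2=\lambda$.
   Context: A Fan-Theobald-von Neumann (FTvN) system is a triple $(\mathcal V,\mathcal W,\lambda)$ where $\mathcal V,\mathcal W$ are real inner product spaces and $\lambda:\mathcal V\to\mathcal W$ is a map such that: (A1) $\|\lambda(x)\|=\|x\|$ for all $x$; (A2) $\langle x,y\rangle\le\langle\lambda(x),\lambda(y)\rangle$ for all $x,y$; (A3) for every $c\in\mathcal V$ and $q\in\lambda(\mathcal V)$ there exists $x$ with $\lambda(x)=q$ and $\langle c,x\rangle=\langle\lambda(c),\lambda(x)\rangle$. An automorphism of the system is an invertible linear map $A:\mathcal V\to\mathcal V$ with $\lambda(Ax)=\lambda(x)$ for all $x$; the set of automorphisms is $\operatorname{Aut}(\mathcal V,\mathcal W,\lambda)$ (a closed subgroup of the orthogonal group $\mathcal O(\mathcal V)$). The system is orbit-transitive if whenever $x,y\in\mathcal V$ with $\lambda(x)=\lambda(y)$ there is $A\in\operatorname{Aut}(\mathcal V,\mathcal W,\lambda)$ with $y=Ax$. A normal decomposition system (NDS) is a triple $(\mathcal V,\mathcal G,\gamma)$ with $\mathcal V$ a real inner product space, $\mathcal G$ a closed subgroup of $\mathcal O(\mathcal V)$ and $\gamma:\mathcal V\to\mathcal V$ such that (a) $\gamma(Ax)=\gamma(x)$ for all $x\in\mathcal V$, $A\in\mathcal G$; (b) for each $x$ there is $A\in\mathcal G$ with $x=A\gamma(x)$;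 (c) $\langle x,y\rangle\le\langle\gamma(x),\gamma(y)\rangle$ for all $x,y$. An NDS $(\mathcal V,\mathcal G,\gamma)$ yields the FTvN system $(\mathcal V,\operatorname{span}(\gamma(\mathcal V)),\gamma)$. The FTvN system $(\mathcal V,\mathcal W,\lambda)$ is said to come from an NDS if $\mathcal W$ is a linear subspace of $\mathcal V$ with the induced inner product and there is a closed subgroup $\mathcal G$ of $\mathcal O(\mathcal V)$ such that $(\mathcal V,\mathcal G,\lambda)$ is an NDS (viewing $\lambda$ as a map into $\mathcal V$). *)

(* Defs.v *)
From HB Require Import structures.
From mathcomp Require Import all_boot all_order all_algebra.
From mathcomp Require Import reals.
Set Implicit Arguments. Unset Strict Implicit. Unset Printing Implicit Defensive.
Import Order.TTheory GRing.Theory Num.Theory.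
Local Open Scope ring_scope.

Section Defs.
Variable R : realType.

Definition is_inner_product (V : lmodType R) (ip : V -> V -> R) : Prop :=
  [/\ forall x y, ip x y = ip y x,
      forall (a : R) (x y z : V), ip (a *: x + y) z = a * ip x z + ip y z
    & forall x : V, x != 0 -> 0 < ip x x].

Definition ipnorm (V : lmodType R) (ip : V -> V -> R) (x : V) : R :=
  Num.sqrt (ip x x).

Definition is_linear_map (V U : lmodType R) (f : V -> U) : Prop :=
  forall (a : R) (x y : V), f (a *: x + y) = a *: f x + f y.

Definition FTvN (V W : lmodType R) (ipV : V -> V -> R) (ipW : W -> W -> R)
    (lam : V -> W) : Prop :=
  [/\ (* A1 *) forall x, ipnorm ipW (lam x) = ipnorm ipV x,
      (* A2 *) forall x y, ipV x y <= ipW (lam x) (lam y)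
    & (* A3 *) forall (c : V) (q : W), (exists v, lam v = q) ->
         exists x, lam x = q /\ ipV c x = ipW (lam c) (lam x)].

Definition is_automorphism (V W : lmodType R) (lam : V -> W) (A : V -> V) : Prop :=
  [/\ is_linear_map A, bijective A & forall x, lam (A x) = lam x].

Definition orbit_transitive (V W : lmodType R) (lam : V -> W) : Prop :=
  forall x y : V, lam x = lam y ->
    exists A, is_automorphism lam A /\ y = A x.

Definition is_orthogonal (V : lmodType R) (ip : V -> V -> R) (A : V -> V) : Prop :=
  [/\ is_linear_map A, bijective A & forall x y, ip (A x) (A y) = ip x y].

(* Topological closedness of a set G of operators in O(V): since V is
   finite dimensional, the topology of O(V) is that of pointwise convergence
   (equivalently, operator-norm convergence), which is metrizable, so closed
   = sequentially closed. *)
Definition op_closed (V : lmodType R) (ip : V -> V -> R) (G : (V -> V) -> Prop) : Prop :=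
  forall (An : nat -> V -> V) (A : V -> V),
    (forall n, G (An n)) ->
    (forall x, forall e : R, 0 < e -> exists N : nat, forall n, (N <= n)%N ->
         ipnorm ip (An n x - A x) < e) ->
    G A.

Definition closed_subgroup_of_O (V : lmodType R) (ip : V -> V -> R)
    (G : (V -> V) -> Prop) : Prop :=
  [/\ forall A, G A -> is_orthogonal ip A,
      G id,
      forall A B, G A -> G B -> G (A \o B),
      forall A, G A -> exists B, [/\ G B, cancel A B & cancel B A]
    & op_closed ip G].

Definition NDS (V : lmodType R) (ip : V -> V -> R) (G : (V -> V) -> Prop)
    (gamma : V -> V) : Prop :=
  [/\ closed_subgroup_of_O ip G,
      (* a *) forall x A, G A -> gamma (A x) = gamma x,
      (* b *) forall x, exists A, G A /\ x = A (gamma x)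
    & (* c *) forall x y, ip x y <= ip (gamma x) (gamma y)].

(* "W is a linear subspace of V with the induced inner product":
   W is identified with its image under a linear map iota : W -> V
   preserving the inner product (hence injective). *)
Definition subspace_embedding (V W : lmodType R) (ipV : V -> V -> R)
    (ipW : W -> W -> R) (iota : W -> V) : Prop :=
  is_linear_map iota /\ forall u v, ipV (iota u) (iota v) = ipW u v.

Definition comes_from_NDS (V W : lmodType R) (ipV : V -> V -> R)
    (ipW : W -> W -> R) (lam : V -> W) : Prop :=
  exists iota : W -> V, subspace_embedding ipV ipW iota /\
    exists G, NDS ipV G (iota \o lam).

End Defs.

(* Main.v *)
Require Import Defs.
From HB Require Import structures.
From mathcomp Require Import all_boot all_order all_algebra.
From mathcomp Require Import reals.
From mathcomp Require Import ring lra.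
Import Order.TTheory GRing.Theory Num.Theory.
Local Open Scope ring_scope.
Set Implicit Arguments. Unset Strict Implicit.

Section IP.
Variable R : realType.
Variable V : lmodType R.
Variable ip : V -> V -> R.
Hypothesis Hip : is_inner_product ip.

Lemma ipC x y : ip x y = ip y x.
Proof. by case: Hip. Qed.

Lemma ipL a x y z : ip (a *: x + y) z = a * ip x z + ip y z.
Proof. by case: Hip. Qed.

Lemma ip0l z : ip 0 z = 0.
Proof.
have := ipL 1 0 0 z; rewrite scaler0 addr0 mul1r => h.
lra.
Qed.

Lemma ipDl x y z : ip (x + y) z = ip x z + ip y z.
Proof. by rewrite -[x in LHS]scale1r ipL mul1r. Qed.

Lemma ipZl a x z : ip (a *: x) z = a * ip x z.
Proof. by rewrite -[a *: x]addr0 ipL ip0l addr0. Qed.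

Lemma ipNl x z : ip (- x) z = - ip x z.
Proof. by rewrite -scaleN1r ipZl mulN1r. Qed.

Lemma ipBl x y z : ip (x - y) z = ip x z - ip y z.
Proof. by rewrite ipDl ipNl. Qed.

Lemma ip0r z : ip z 0 = 0.
Proof. by rewrite ipC ip0l. Qed.

Lemma ipDr x y z : ip z (x + y) = ip z x + ip z y.
Proof. by rewrite ipC ipDl !(ipC z). Qed.

Lemma ipZr a x z : ip z (a *: x) = a * ip z x.
Proof. by rewrite ipC ipZl ipC. Qed.

Lemma ipNr x z : ip z (- x) = - ip z x.
Proof. by rewrite ipC ipNl ipC. Qed.

Lemma ipBr x y z : ip z (x - y) = ip z x - ip z y.
Proof. by rewrite ipC ipBl !(ipC z). Qed.

Lemma ipxx_ge0 x : 0 <= ip x x.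
Proof.
have [->|nz] := eqVneq x 0; first by rewrite ip0l.
by case: Hip => _ _ /(_ x nz) /ltW.
Qed.

Lemma ipxx_eq0 x : ip x x = 0 -> x = 0.
Proof.
move=> h; apply/eqP; apply/negPn/negP => nz.
by case: Hip => _ _ /(_ x nz); rewrite h ltxx.
Qed.

Lemma ipxx_le0 x : ip x x <= 0 -> x = 0.
Proof. by move=> h; apply: ipxx_eq0; apply/eqP; rewrite eq_le h ipxx_ge0. Qed.

Lemma ip_par x y : ip (x + y) (x + y) <= 2 * ip x x + 2 * ip y y.
Proof.
have := ipxx_ge0 (x - y).
rewrite !ipBl !ipBr !ipDl !ipDr (ipC y x) => h.
lra.
Qed.

Lemma ip_expand x y : ip (x + y) (x + y) = ip x x + 2 * ip x y + ip y y.
Proof. rewrite !ipDl !ipDr (ipC y x); ring. Qed.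

Lemma ipnorm_lt x d : 0 < d -> ipnorm ip x < Num.sqrt d -> ip x x < d.
Proof. by move=> d0; rewrite /ipnorm ltr_sqrt. Qed.

End IP.

Lemma ipnorm_eq (R : realType) (V W : lmodType R) (ip : V -> V -> R) (ipW : W -> W -> R)
   (Hv : is_inner_product ip) (Hw : is_inner_product ipW)
   (u : W) (x : V) : ipnorm ipW u = ipnorm ip x -> ipW u u = ip x x.
Proof.
move=> /eqP; rewrite /ipnorm eqr_sqrt; [by move/eqP|exact: ipxx_ge0|exact: ipxx_ge0].
Qed.

Lemma zid (M : zmodType) (P X Y Q Z : M) : P - (Q+Z) = -(X+Y-P) + (X - Q + (Y - Z)).
Proof.
rewrite opprB -addrA; congr (_ + _).
by rewrite opprD addrACA opprD addrA -[- X - Y]opprD -[X + Y - Q - Z]addrA addKr.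
Qed.


Lemma le0_of_lt (R : realType) (z : R) : (forall e, 0 < e -> z < e) -> z <= 0.
Proof.
move=> h; rewrite leNgt; apply/negP => z0.
by have := h z z0; rewrite ltxx.
Qed.

Lemma inj_lin_bij (R : realType) (V : vectType R) (A : V -> V) :
  (forall (a : R) (x y : V), A (a *: x + y) = a *: A x + A y) ->
  injective A -> bijective A.
Proof.
move=> linA injA.
pose AL : {linear V -> V} := HB.pack A (GRing.isLinear.Build R V V *:%R A linA).
have kf : lker (linfun AL) == 0%VS.
  by apply/lker0P => x y; rewrite !lfunE /=; apply: injA.
exists ((linfun AL)^-1)%VF.
  by move=> x; apply: injA; have := lker0_lfunVK kf (A x); rewrite lfunE.
by move=> x; have := lker0_lfunVK kf x; rewrite lfunE.
Qed.

Theorem theorem7p3 (R : realType) (V : vectType R) (W : lmodType R)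
    (ipV : V -> V -> R) (ipW : W -> W -> R) (lam : V -> W) :
  is_inner_product ipV -> is_inner_product ipW ->
  FTvN ipV ipW lam ->
  (comes_from_NDS ipV ipW lam <->
   orbit_transitive lam /\
   exists iota : W -> V, subspace_embedding ipV ipW iota /\
     (* lam^2 = lam, with W viewed inside V via iota *)
     forall x, lam (iota (lam x)) = lam x).
Proof.
move=> HV HW [A1 A2 A3]; split.
- case=> iota [[linI isoI] [G [[Gorth Gid Gcomp Ginv Gcl] Ga Gb Gc]]].
  have injI : injective iota.
    move=> u v e; apply/eqP; rewrite -subr_eq0; apply/eqP.
    apply: (ipxx_eq0 HW); rewrite -isoI.
    have -> : iota (u - v) = iota u - iota v.
      by rewrite -scaleN1r addrC linI scaleN1r addrC.
    by rewrite e subrr (ip0l HV).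
  have idem x : iota (lam (iota (lam x))) = iota (lam x).
    have [A [GA hA]] := Gb x.
    by have := Ga ((iota \o lam) x) A GA; rewrite /= -hA => <-.
  split.
  + move=> x y exy.
    have [A [GA hA]] := Gb x; have [B [GB hB]] := Gb y.
    have [Ai [GAi AK AiK]] := Ginv A GA.
    have GC : G (B \o Ai) := Gcomp _ _ GB GAi.
    exists (B \o Ai); split.
      have [lin bij _] := Gorth _ GC; split => // z.
      by apply: injI; exact: (Ga z _ GC).
    by rewrite /= {1}hA AK /= exy -hB.
  + exists iota; split => //. by move=> x; apply: injI; exact: idem.
- case=> OT [iota [[linI isoI] idem]].
  exists iota; split => //.
  exists (is_automorphism lam).
  have qlam x : ipW (lam x) (lam x) = ipV x x := ipnorm_eq HV HW (A1 x).
  have lamLip u v : ipW (lam u - lam v) (lam u - lam v) <= ipV (u - v) (u - v).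
    rewrite !(ipBl HW) !(ipBr HW) !(ipBl HV) !(ipBr HV) !qlam (ipC HW (lam v)) (ipC HV v).
    have := A2 u v; lra.
  have autorth A : is_automorphism lam A -> Defs.is_orthogonal ipV A.
    move=> [lin bij lA]; split => // x y.
    have qA z : ipV (A z) (A z) = ipV z z by rewrite -qlam lA qlam.
    have h1 := qA (x + y).
    have eAD : A (x + y) = A x + A y by have := lin 1 x y; rewrite !scale1r.
    rewrite eAD !(ip_expand HV) !qA in h1.
    lra.
  split; first split.
  + exact: autorth.
  + by split => //; exists id.
  + move=> A B [lA bA hA] [lB bB hB]; split.
    * by move=> a x y /=; rewrite lB lA.
    * exact: bij_comp.
    * by move=> x /=; rewrite hA hB.
  + move=> A [lA [B AB BA] hA]; exists B; split => //; split.
    * by move=> a x y; apply: (can_inj AB); rewrite lA !BA.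
    * by exists A.
    * by move=> x; rewrite -{2}(BA x) hA.
  + move=> An A GAn conv.
    have lamA x : lam (A x) = lam x.
      apply/eqP; rewrite eq_sym -subr_eq0; apply/eqP; apply: (ipxx_le0 HW).
      apply: le0_of_lt => e e0.
      have sd0 : 0 < Num.sqrt e by rewrite sqrtr_gt0.
      have [N HN] := conv x (Num.sqrt e) sd0.
      have h := ipnorm_lt e0 (HN N (leqnn N)).
      have := lamLip (An N x) (A x); case: (GAn N) => _ _ ->.
      by move=> h2; apply: le_lt_trans h2 h.
    have linA : is_linear_map A.
      move=> a x y.
      apply/eqP; rewrite -subr_eq0; apply/eqP; apply: (ipxx_le0 HV).
      apply: le0_of_lt => e e0.
      have k0 : 0 < 7 + 4 * a ^+ 2 by have := sqr_ge0 a; lra.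
      pose d := e / (7 + 4 * a ^+ 2).
      have d0 : 0 < d by rewrite /d divr_gt0.
      have de : d * (7 + 4 * a ^+ 2) = e by rewrite /d divfK // gt_eqF.
      have sd0 : 0 < Num.sqrt d by rewrite sqrtr_gt0.
      have [N1 H1] := conv (a *: x + y) (Num.sqrt d) sd0.
      have [N2 H2] := conv x (Num.sqrt d) sd0.
      have [N3 H3] := conv y (Num.sqrt d) sd0.
      pose n := maxn N1 (maxn N2 N3).
      have h1 := ipnorm_lt d0 (H1 n (leq_maxl _ _)).
      have h2 := ipnorm_lt d0 (H2 n (leq_trans (leq_maxl _ _) (leq_maxr _ _))).
      have h3 := ipnorm_lt d0 (H3 n (leq_trans (leq_maxr _ _) (leq_maxr _ _))).
      case: (GAn n) => ln _ _.
      set u := An n (a *: x + y) - A (a *: x + y) in h1.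
      set v := An n x - A x in h2.
      set w := An n y - A y in h3.
      have ed : A (a *: x + y) - (a *: A x + A y) = - u + (a *: v + w).
        by rewrite /u /v /w ln scalerBr (zid _ (a *: An n x) (An n y)).
      rewrite ed.
      have p1 := ip_par HV (- u) (a *: v + w).
      have p2 := ip_par HV (a *: v) w.
      rewrite (ipNl HV) (ipNr HV) opprK in p1.
      rewrite (ipZl HV) (ipZr HV) mulrA -expr2 in p2.
      have q2 : a ^+ 2 * ipV v v <= a ^+ 2 * d.
        by rewrite ler_wpM2l ?sqr_ge0 // ltW.
      have := ipxx_ge0 HV v; have := ipxx_ge0 HV w; have := ipxx_ge0 HV u.
      lra.
    have injA : injective A.
      move=> x y exy; apply/eqP; rewrite -subr_eq0; apply/eqP; apply: (ipxx_eq0 HV).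
      rewrite -qlam -lamA.
      have -> : A (x - y) = A x - A y.
        by rewrite -scaleN1r addrC linA scaleN1r addrC.
      by rewrite exy subrr qlam (ip0l HV).
    split; [exact: linA | exact: inj_lin_bij linA injA | exact: lamA].
  + by move=> x A [_ _ hA] /=; rewrite hA.
  + move=> x; have [A [HA e]] := OT (iota (lam x)) x (idem x).
    by exists A; split.
  + by move=> x y /=; rewrite isoI; exact: A2.
Qed.
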